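(* Assume in addition that $G$ is commutative. Then there exists $C>0$ such that $C\,\|\nabla\phi(x)\|^{4/3}\ge\phi(x)$ for all $x\in\mathbb{R}^N$.
   Context: Let $G$ be a closed subgroup of $GL(N,\mathbb{R})$ invariant under transpose $g\mapsto g^{*}$, and $\mathfrak p=\{X\in\mathrm{Lie}(G):X^{*}=X\}$. Equip $M_N(\mathbb{R})$ with the inner product $\mathrm{tr}(XY^{*})$, let $X_1,\dots,X_n$ be an orthonormal basis of $\mathfrak p$, and set $\phi(x)=\sum_{i=1}^n\langle X_ix,x\rangle^2$ for $x\in\mathbb{R}^N$ (standard inner product), so that $\nabla\phi(x)=4\sum_i\langle X_ix,x\rangle X_ix$ ($\nabla$ the Euclidean gradient). *)

(* Defs.v *)
(* real matrices represented concretely as functions nat -> nat -> R,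
   only entries with indices < N being relevant. *)
From Stdlib Require Import Reals Lra Arith Factorial.
Open Scope R_scope.

Definition mat := nat -> nat -> R.
Definition vec := nat -> R.

Fixpoint rsum (n : nat) (f : nat -> R) : R :=
  match n with O => 0 | S k => rsum k f + f k end.

Definition meq (N : nat) (A B : mat) : Prop :=
  forall i j, (i < N)%nat -> (j < N)%nat -> A i j = B i j.

Definition mid : mat := fun i j => if Nat.eqb i j then 1 else 0.
Definition mmul (N : nat) (A B : mat) : mat :=
  fun i j => rsum N (fun k => A i k * B k j).
Definition mtr (A : mat) : mat := fun i j => A j i.
Definition mscale (t : R) (A : mat) : mat := fun i j => t * A i j.

Fixpoint mpow (N : nat) (A : mat) (k : nat) : mat :=
  match k with O => mid | S k' => mmul N (mpow N A k') A end.

Definition invertible (N : nat) (A : mat) : Prop :=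
  exists B, meq N (mmul N A B) mid /\ meq N (mmul N B A) mid.

Definition mexp_is (N : nat) (X E : mat) : Prop :=
  forall i j, (i < N)%nat -> (j < N)%nat ->
    Un_cv (fun m => sum_f_R0 (fun k => mpow N X k i j / INR (fact k)) m) (E i j).

Definition closed_subgroup_GL (N : nat) (G : mat -> Prop) : Prop :=
  (forall A B, G A -> meq N A B -> G B) /\
  (forall A, G A -> invertible N A) /\
  G mid /\
  (forall A B, G A -> G B -> G (mmul N A B)) /\
  (forall A, G A -> exists B, G B /\ meq N (mmul N A B) mid) /\
  (forall (s : nat -> mat) (A : mat), (forall k, G (s k)) ->
     (forall i j, (i < N)%nat -> (j < N)%nat -> Un_cv (fun k => s k i j) (A i j)) ->
     invertible N A -> G A).

Definition transpose_invariant (G : mat -> Prop) : Prop :=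
  forall A, G A -> G (mtr A).

Definition commutative_group (N : nat) (G : mat -> Prop) : Prop :=
  forall A B, G A -> G B -> meq N (mmul N A B) (mmul N B A).

Definition lie (N : nat) (G : mat -> Prop) (X : mat) : Prop :=
  forall t : R, exists E, mexp_is N (mscale t X) E /\ G E.

Definition pspace (N : nat) (G : mat -> Prop) (X : mat) : Prop :=
  lie N G X /\ meq N (mtr X) X.

(* <X, Y> = tr(X Y^T) *)
Definition mip (N : nat) (X Y : mat) : R :=
  rsum N (fun i => rsum N (fun j => X i j * Y i j)).

Definition orthonormal_basis (N : nat) (G : mat -> Prop) (n : nat) (Xs : nat -> mat) : Prop :=
  (forall i, (i < n)%nat -> pspace N G (Xs i)) /\
  (forall i j, (i < n)%nat -> (j < n)%nat ->
      mip N (Xs i) (Xs j) = if Nat.eqb i j then 1 else 0) /\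
  (forall Y, pspace N G Y -> exists c : nat -> R,
      meq N Y (fun a b => rsum n (fun i => c i * Xs i a b))).

Definition mapply (N : nat) (X : mat) (x : vec) : vec :=
  fun a => rsum N (fun b => X a b * x b).
Definition vip (N : nat) (x y : vec) : R := rsum N (fun a => x a * y a).
Definition vnorm (N : nat) (x : vec) : R := sqrt (vip N x x).

Definition phi (N n : nat) (Xs : nat -> mat) (x : vec) : R :=
  rsum n (fun i => (vip N (mapply N (Xs i) x) x) ^ 2).

Definition grad_phi (N n : nat) (Xs : nat -> mat) (x : vec) : vec :=
  fun a => 4 * rsum n (fun i => vip N (mapply N (Xs i) x) x * mapply N (Xs i) x a).

(* r^y for r >= 0 and y > 0, with the convention 0^y = 0 *)
Definition powr (r y : R) : R := if Rle_dec r 0 then 0 else Rpower r y.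

(* Main.v *)
Require Import Defs.
From Stdlib Require Import Reals Lra Lia Psatz Arith Factorial ClassicalEpsilon Classical.
From mathcomp Require ssreflect ssrfun ssrbool ssrnat eqtype seq fintype bigop ssralg matrix poly mxpoly Rstruct.

Module CHmod.
Import ssreflect ssrfun ssrbool ssrnat eqtype seq fintype bigop ssralg matrix poly mxpoly Rstruct.
Import GRing.Theory.
Local Open Scope ring_scope.

Lemma rsum_big (n : nat) (f : nat -> R) : rsum n f = (\sum_(j < n) f j)%R.
Proof.
elim: n => [|n IH] /=; first by rewrite big_ord0.
by rewrite big_ord_recr /= IH.
Qed.

Lemma CH_raw (N : nat) (T : mat) : exists c : nat -> R, c N = 1%R /\
  forall a b, (a < N)%coq_nat -> (b < N)%coq_nat ->
    rsum (S N) (fun k => (c k * mpow N T k a b)%R) = 0%R.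
Proof.
case: N => [|n].
  by exists (fun _ => 1%R); split => // a b /leP.
pose A : 'M[R]_n.+1 := \matrix_(i, j) T i j.
have HA : forall k (i j : 'I_n.+1), (A ^+ k) i j = mpow n.+1 T k i j.
  elim => [|k IH] i j.
    rewrite expr0 mxE /= /mid.
    case: (eqVneq i j) => [->|H]; first by rewrite Nat.eqb_refl.
    case E: (Nat.eqb i j) => //.
    by move/Nat.eqb_eq: E => /val_inj E; rewrite E eqxx in H.
  rewrite exprSr mxE /= /mmul rsum_big.
  apply: eq_bigr => l _; by rewrite IH mxE.
pose p := char_poly A.
exists (fun k => p`_k); split.
  have := char_poly_monic A; rewrite /monic -/p => /eqP <-.
  by rewrite lead_coefE size_char_poly.
move=> a b /leP Ha /leP Hb.
have E : (\sum_(k < size p) p`_k *: A^+k) = 0.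
  have := Cayley_Hamilton A; rewrite -/p.
  rewrite -{1}[p]coefK poly_def linear_sum /= => H.
  rewrite -{}[RHS]H.
  apply: eq_bigr => k _.
  by rewrite linearZ /= rmorphXn /= horner_mx_X.
rewrite rsum_big.
transitivity ((\sum_(k < n.+2) p`_k *: A^+k) (Ordinal Ha) (Ordinal Hb)).
  rewrite summxE; apply: eq_bigr => k _.
  by rewrite mxE HA.
by rewrite -(size_char_poly A) -/p E mxE.
Qed.
End CHmod.
Set Bullet Behavior "Strict Subproofs".
Open Scope R_scope.

Lemma CH (N : nat) (T : mat) : exists c : nat -> R, c N = 1 /\
  forall a b, (a < N)%nat -> (b < N)%nat ->
    rsum (S N) (fun k => c k * mpow N T k a b) = 0.
Proof. exact (CHmod.CH_raw N T). Qed.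


Lemma rsum_ext n f g : (forall k, (k < n)%nat -> f k = g k) -> rsum n f = rsum n g.
Proof. induction n; simpl; intros H; auto. rewrite IHn by (intros; apply H; lia). rewrite H by lia. reflexivity. Qed.

Lemma rsum_plus n f g : rsum n (fun k => f k + g k) = rsum n f + rsum n g.
Proof. induction n; simpl; [ring|rewrite IHn; ring]. Qed.

Lemma rsum_scal n c f : rsum n (fun k => c * f k) = c * rsum n f.
Proof. induction n; simpl; [ring|rewrite IHn; ring]. Qed.

Lemma rsum_scalr n c f : rsum n (fun k => f k * c) = rsum n f * c.
Proof. induction n; simpl; [ring|rewrite IHn; ring]. Qed.

Lemma rsum_minus n f g : rsum n (fun k => f k - g k) = rsum n f - rsum n g.
Proof. induction n; simpl; [ring|rewrite IHn; ring]. Qed.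

Lemma rsum_zero n : rsum n (fun _ => 0) = 0.
Proof. induction n; simpl; [ring|rewrite IHn; ring]. Qed.

Lemma rsum_const n c : rsum n (fun _ => c) = INR n * c.
Proof. induction n; simpl rsum; [simpl; ring|rewrite IHn, S_INR; ring]. Qed.

Lemma rsum_swap n m f : rsum n (fun i => rsum m (fun j => f i j)) = rsum m (fun j => rsum n (fun i => f i j)).
Proof.
  induction n; simpl.
  - rewrite rsum_zero. reflexivity.
  - rewrite IHn. rewrite <- rsum_plus. reflexivity.
Qed.

Lemma rsum_le n f g : (forall k, (k < n)%nat -> f k <= g k) -> rsum n f <= rsum n g.
Proof. induction n; simpl; intros H; [lra|]. assert (f n <= g n) by (apply H; lia).
  assert (rsum n f <= rsum n g) by (apply IHn; intros; apply H; lia). lra. Qed.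

Lemma rsum_nonneg n f : (forall k, (k < n)%nat -> 0 <= f k) -> 0 <= rsum n f.
Proof. intros H. rewrite <- (rsum_zero n). apply rsum_le. auto. Qed.

Lemma rsum_abs n f : Rabs (rsum n f) <= rsum n (fun k => Rabs (f k)).
Proof. induction n; simpl. rewrite Rabs_R0; lra.
  eapply Rle_trans; [apply Rabs_triang|]. lra. Qed.

Lemma rsum_split n m f : rsum (n + m) f = rsum n f + rsum m (fun k => f (n + k)%nat).
Proof. induction m; simpl. rewrite Nat.add_0_r; ring.
  rewrite Nat.add_succ_r. simpl. rewrite IHm. ring. Qed.

Lemma rsum_first n f : rsum (S n) f = f O + rsum n (fun k => f (S k)).
Proof. induction n; simpl in *. ring. rewrite IHn. ring. Qed.

Lemma rsum_term_le n f k : (forall j, (j < n)%nat -> 0 <= f j) -> (k < n)%nat -> f k <= rsum n f.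
Proof. induction n; intros H Hk; [lia|]. simpl.
  destruct (Nat.eq_dec k n) as [->|Hne].
  - assert (0 <= rsum n f) by (apply rsum_nonneg; intros; apply H; lia). lra.
  - assert (f k <= rsum n f) by (apply IHn; [intros; apply H; lia|lia]).
    assert (0 <= f n) by (apply H; lia). lra. Qed.

Lemma rsum_sq_zero n f : rsum n (fun k => f k * f k) = 0 -> forall k, (k < n)%nat -> f k = 0.
Proof. intros H k Hk.
  assert (f k * f k <= rsum n (fun k => f k * f k)).
  { apply (rsum_term_le n (fun k => f k * f k)). intros j _. apply Rle_0_sqr. exact Hk. }
  assert (0 <= rsum n (fun k => f k * f k)) by (apply rsum_nonneg; intros j _; apply Rle_0_sqr).
  nra. Qed.

Lemma CS n f g : (rsum n (fun k => f k * g k))^2 <= rsum n (fun k => f k * f k) * rsum n (fun k => g k * g k).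
Proof.
  induction n; simpl; [lra|].
  set (A := rsum n (fun k => f k * g k)) in *.
  set (F := rsum n (fun k => f k * f k)) in *.
  set (G := rsum n (fun k => g k * g k)) in *.
  assert (HF : 0 <= F) by (apply rsum_nonneg; intros; nra).
  assert (HG : 0 <= G) by (apply rsum_nonneg; intros; nra).
  set (a := f n) in *. set (b := g n) in *.
  assert (H1 : (2*A*a*b)^2 <= (F*b*b + G*a*a)^2).
  { assert (4*F*G*(a*a)*(b*b) <= (F*b*b + G*a*a)^2).
    { assert (0 <= (F*b*b - G*a*a)^2) by apply pow2_ge_0. nra. }
    assert (A^2 <= F*G) by (simpl in IHn; lra). 
    assert (0 <= (a*a)*(b*b)) by (apply Rmult_le_pos; apply Rle_0_sqr).
    assert ((2*A*a*b)^2 = 4*A^2*((a*a)*(b*b))) by ring.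
    assert (A^2*((a*a)*(b*b)) <= F*G*((a*a)*(b*b))) by (apply Rmult_le_compat_r; auto).
    nra. }
  assert (H2 : 0 <= F*b*b + G*a*a) by nra.
  assert (2*A*a*b <= F*b*b + G*a*a).
  { destruct (Rle_dec (2*A*a*b) 0); [lra|]. nra. }
  simpl in IHn. nra.
Qed.


Definition nsq N (y : vec) := vip N y y.
Definition frob N (M : mat) := rsum N (fun a => rsum N (fun b => M a b * M a b)).

Lemma nsq_nonneg N y : 0 <= nsq N y.
Proof. unfold nsq, vip. apply rsum_nonneg. intros. apply Rle_0_sqr. Qed.

Lemma frob_nonneg N M : 0 <= frob N M.
Proof. unfold frob. apply rsum_nonneg. intros. apply rsum_nonneg. intros. apply Rle_0_sqr. Qed.

Lemma vip_ext N u u' v v' : (forall a, (a < N)%nat -> u a = u' a) -> (forall a, (a < N)%nat -> v a = v' a) ->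
  vip N u v = vip N u' v'.
Proof. intros H1 H2. unfold vip. apply rsum_ext. intros. rewrite H1, H2 by auto. reflexivity. Qed.

Lemma vip_sym N u v : vip N u v = vip N v u.
Proof. unfold vip. apply rsum_ext. intros; ring. Qed.

Lemma mapply_ext N M x y : (forall b, (b < N)%nat -> x b = y b) -> forall a, mapply N M x a = mapply N M y a.
Proof. intros H a. unfold mapply. apply rsum_ext. intros. rewrite H by auto. reflexivity. Qed.

Lemma nsq_zero N y : nsq N y = 0 -> forall a, (a < N)%nat -> y a = 0.
Proof. intros H. apply rsum_sq_zero. exact H. Qed.

Lemma nsq_add N u v : nsq N (fun a => u a + v a) <= 2 * nsq N u + 2 * nsq N v.
Proof. unfold nsq, vip. rewrite <- !rsum_scal, <- rsum_plus. apply rsum_le. intros k _. pose proof (Rle_0_sqr (u k - v k)). unfold Rsqr in H. lra. Qed.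

Lemma vip_le N u v : vip N u v <= (nsq N u + nsq N v) / 2.
Proof. unfold nsq, vip. 
  assert (rsum N (fun a => u a * v a) <= rsum N (fun a => (u a * u a + v a * v a)/2)).
  { apply rsum_le. intros k _. pose proof (Rle_0_sqr (u k - v k)). unfold Rsqr in H. lra. }
  unfold Rdiv in *. rewrite rsum_scalr, rsum_plus in H. lra. Qed.

Lemma mapply_bound N M x : nsq N (mapply N M x) <= frob N M * nsq N x.
Proof.
  unfold nsq at 1, vip, frob. rewrite <- rsum_scalr. apply rsum_le. intros a Ha.
  unfold mapply, nsq, vip. pose proof (CS N (fun b => M a b) x). simpl in H. lra.
Qed.

Lemma mapply_mmul N A B x a : mapply N (mmul N A B) x a = mapply N A (mapply N B x) a.
Proof.
  unfold mapply, mmul.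
  transitivity (rsum N (fun b => rsum N (fun k => A a k * (B k b * x b)))).
  { apply rsum_ext. intros. rewrite <- rsum_scalr. apply rsum_ext. intros. ring. }
  rewrite rsum_swap. apply rsum_ext. intros. apply rsum_scal.
Qed.

Lemma mapply_lin N M m (d : nat -> R) (v : nat -> vec) a :
  mapply N M (fun b => rsum m (fun j => d j * v j b)) a = rsum m (fun j => d j * mapply N M (v j) a).
Proof.
  unfold mapply.
  transitivity (rsum N (fun b => rsum m (fun j => d j * (M a b * v j b)))).
  { apply rsum_ext. intros. rewrite <- rsum_scal. apply rsum_ext. intros. ring. }
  rewrite rsum_swap. apply rsum_ext. intros. apply rsum_scal.
Qed.

Lemma mapply_plus N M u v a : mapply N M (fun b => u b + v b) a = mapply N M u a + mapply N M v a.
Proof. unfold mapply. rewrite <- rsum_plus. apply rsum_ext. intros; ring. Qed.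

Lemma mapply_minus N M u v a : mapply N M (fun b => u b - v b) a = mapply N M u a - mapply N M v a.
Proof. unfold mapply. rewrite <- rsum_minus. apply rsum_ext. intros; ring. Qed.

Lemma mapply_scal N M c u a : mapply N M (fun b => c * u b) a = c * mapply N M u a.
Proof. unfold mapply. rewrite <- rsum_scal. apply rsum_ext. intros; ring. Qed.

Lemma mapply_zero N M a : mapply N M (fun _ => 0) a = 0.
Proof. unfold mapply. transitivity (rsum N (fun _ => 0)). apply rsum_ext. intros; ring. apply rsum_zero. Qed.

Lemma mapply_msum N n (c : nat -> R) (Xs : nat -> mat) x a :
  mapply N (fun p q => rsum n (fun i => c i * Xs i p q)) x a = rsum n (fun i => c i * mapply N (Xs i) x a).
Proof.
  unfold mapply.
  transitivity (rsum N (fun b => rsum n (fun i => c i * (Xs i a b * x b)))).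
  { apply rsum_ext. intros. rewrite <- rsum_scalr. apply rsum_ext. intros. ring. }
  rewrite rsum_swap. apply rsum_ext. intros. apply rsum_scal.
Qed.

Lemma mapply_mdiff N S T x a : mapply N (fun p q => S p q - T p q) x a = mapply N S x a - mapply N T x a.
Proof. unfold mapply. rewrite <- rsum_minus. apply rsum_ext. intros; ring. Qed.

Lemma vip_sym_mat N T u v : meq N (mtr T) T -> vip N (mapply N T u) v = vip N u (mapply N T v).
Proof.
  intros HT. unfold vip, mapply.
  transitivity (rsum N (fun a => rsum N (fun b => u b * (T a b * v a)))).
  { apply rsum_ext. intros. rewrite <- rsum_scalr. apply rsum_ext. intros. ring. }
  rewrite rsum_swap. apply rsum_ext. intros b Hb. rewrite <- rsum_scal. apply rsum_ext. intros a Ha.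
  assert (T a b = T b a) by (apply (HT b a); auto). rewrite H. ring.
Qed.

Lemma vip_lin_l N m (d : nat -> R) (v : nat -> vec) w :
  vip N (fun a => rsum m (fun j => d j * v j a)) w = rsum m (fun j => d j * vip N (v j) w).
Proof.
  unfold vip.
  transitivity (rsum N (fun a => rsum m (fun j => d j * (v j a * w a)))).
  { apply rsum_ext. intros. rewrite <- rsum_scalr. apply rsum_ext. intros. ring. }
  rewrite rsum_swap. apply rsum_ext. intros. apply rsum_scal.
Qed.

Lemma vip_lin_r N m (d : nat -> R) (v : nat -> vec) w :
  vip N w (fun a => rsum m (fun j => d j * v j a)) = rsum m (fun j => d j * vip N w (v j)).
Proof. rewrite vip_sym, vip_lin_l. apply rsum_ext. intros. rewrite vip_sym. reflexivity. Qed.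


Fixpoint vp N (T : mat) (k : nat) (x : vec) : vec :=
  match k with O => x | S k => mapply N T (vp N T k x) end.

Lemma vp_ext N T x y : (forall b, (b < N)%nat -> x b = y b) ->
  forall k a, (a < N)%nat -> vp N T k x a = vp N T k y a.
Proof. intros H k. induction k; intros a Ha; simpl; auto. apply mapply_ext. auto. Qed.

Lemma vp_shift N T k x a : vp N T k (mapply N T x) a = mapply N T (vp N T k x) a.
Proof. revert a. induction k; intros a; simpl; auto. apply mapply_ext. intros. apply IHk. Qed.

Lemma vp_add N T j k x a : vp N T (j + k) x a = vp N T j (vp N T k x) a.
Proof. revert a. induction j; intros a; simpl; auto. apply mapply_ext. intros. apply IHj. Qed.

Lemma vp_lin N T k m (d : nat -> R) (z : nat -> vec) a :
  vp N T k (fun b => rsum m (fun j => d j * z j b)) a = rsum m (fun j => d j * vp N T k (z j) a).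
Proof. revert a. induction k; intros a; simpl; auto.
  rewrite <- mapply_lin. apply mapply_ext. intros. apply IHk. Qed.

Lemma rsum_delta N a f : (a < N)%nat -> rsum N (fun b => (if Nat.eqb a b then 1 else 0) * f b) = f a.
Proof.
  induction N; intros Ha; [lia|]. simpl.
  destruct (Nat.eq_dec a N) as [->|Hne].
  - rewrite Nat.eqb_refl.
    assert (rsum N (fun b => (if Nat.eqb N b then 1 else 0) * f b) = 0).
    { transitivity (rsum N (fun _ => 0)); [|apply rsum_zero]. apply rsum_ext. intros k Hk.
      destruct (Nat.eqb N k) eqn:E; [apply Nat.eqb_eq in E; lia|ring]. }
    rewrite H. ring.
  - rewrite IHN by lia. destruct (Nat.eqb a N) eqn:E; [apply Nat.eqb_eq in E; lia|ring].
Qed.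

Lemma mpow_vp N T k x a : (a < N)%nat -> mapply N (mpow N T k) x a = vp N T k x a.
Proof.
  revert x a. induction k; intros x a Ha; simpl.
  - unfold mapply, mid. apply rsum_delta. auto.
  - rewrite mapply_mmul. rewrite IHk by auto. apply vp_shift.
Qed.

Lemma CH_vec N T : exists c : nat -> R, c N = 1 /\
  forall x a, (a < N)%nat -> rsum (S N) (fun k => c k * vp N T k x a) = 0.
Proof.
  destruct (CH N T) as [c [H1 H2]]. exists c. split; auto. intros x a Ha.
  transitivity (rsum (S N) (fun k => c k * mapply N (mpow N T k) x a)).
  { apply rsum_ext. intros. rewrite mpow_vp; auto. }
  unfold mapply.
  transitivity (rsum (S N) (fun k => rsum N (fun b => c k * mpow N T k a b * x b))).
  { apply rsum_ext. intros. rewrite <- rsum_scal. apply rsum_ext. intros; ring. }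
  rewrite rsum_swap. transitivity (rsum N (fun _ => 0)); [|apply rsum_zero].
  apply rsum_ext. intros b Hb. rewrite rsum_scalr. rewrite H2 by auto. ring.
Qed.

Lemma Kpow N T : meq N (mtr T) T -> forall k y, (forall a, (a < N)%nat -> vp N T (S k) y a = 0) ->
  forall a, (a < N)%nat -> mapply N T y a = 0.
Proof.
  intros HT k. induction k; intros y H a Ha.
  - apply (H a Ha).
  - apply IHk; auto. apply nsq_zero. unfold nsq.
    change (vp N T (S k) y) with (mapply N T (vp N T k y)) at 1.
    rewrite vip_sym_mat by auto.
    transitivity (vip N (vp N T k y) (fun _ => 0)).
    + apply vip_ext; [auto|]. intros b Hb. apply H. auto.
    + unfold vip. transitivity (rsum N (fun _ => 0)); [|apply rsum_zero]. apply rsum_ext; intros; ring.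
Qed.

Lemma least_index (P : nat -> Prop) : (forall k, P k \/ ~ P k) -> forall n, P n ->
  exists r, P r /\ (r <= n)%nat /\ forall k, (k < r)%nat -> ~ P k.
Proof.
  intros Hd n.
  assert (G : (exists r, P r /\ (r <= n)%nat /\ forall k, (k < r)%nat -> ~ P k) \/ (forall k, (k <= n)%nat -> ~ P k)).
  { induction n.
    - destruct (Hd 0%nat) as [H|H].
      + left. exists 0%nat. repeat split; auto. intros; lia.
      + right. intros k Hk. assert (k = 0%nat) by lia. subst. auto.
    - destruct IHn as [[r [H1 [H2 H3]]]|H].
      + left. exists r. repeat split; auto.
      + destruct (Hd (S n)) as [H'|H'].
        * left. exists (S n). repeat split; auto. intros k Hk. apply H. lia.
        * right. intros k Hk. destruct (Nat.eq_dec k (S n)) as [->|]; auto. apply H. lia. }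
  intros Hn. destruct G as [G|G]; auto. exfalso. apply (G n); auto.
Qed.

Lemma vp_comm N T S : (forall x a, (a < N)%nat -> mapply N S (mapply N T x) a = mapply N T (mapply N S x) a) ->
  forall k x a, (a < N)%nat -> mapply N S (vp N T k x) a = vp N T k (mapply N S x) a.
Proof.
  intros HS k. induction k; intros x a Ha; simpl; auto.
  rewrite HS by auto. apply mapply_ext. intros. apply IHk. auto.
Qed.

Lemma vip_vp_sym N T k u v : meq N (mtr T) T -> vip N (vp N T k u) v = vip N u (vp N T k v).
Proof.
  intros HT. revert u v. induction k; intros u v; simpl; auto.
  rewrite vip_sym_mat by auto. rewrite IHk. apply vip_ext; auto.
  intros. apply vp_shift.
Qed.

Lemma Wexists N T : meq N (mtr T) T -> exists Wm : mat,
  (forall y a, (a < N)%nat -> mapply N T y a = mapply N T (mapply N T (mapply N Wm y)) a) /\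
  (forall S, (forall x a, (a < N)%nat -> mapply N S (mapply N T x) a = mapply N T (mapply N S x) a) ->
     forall x a, (a < N)%nat -> mapply N S (mapply N Wm x) a = mapply N Wm (mapply N S x) a) /\
  (forall u v, vip N (mapply N Wm u) v = vip N u (mapply N Wm v)).
Proof.
  intros HT.
  destruct (CH_vec N T) as [c [Hc1 Hc2]].
  destruct (least_index (fun k => c k <> 0)) with (n := N) as [r [Hr1 [Hr2 Hr3]]].
  { intros k. destruct (Req_dec (c k) 0); [right|left]; tauto. }
  { rewrite Hc1. lra. }
  set (M := (N - r)%nat).
  set (d := fun j => - c (r + S j)%nat / c r).
  exists (fun a b => rsum M (fun j => d j * mpow N T j a b)).
  assert (HW : forall y a, (a < N)%nat -> mapply N (fun a b => rsum M (fun j => d j * mpow N T j a b)) y a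
     = rsum M (fun j => d j * vp N T j y a)).
  { intros y a Ha. rewrite mapply_msum. apply rsum_ext. intros. rewrite mpow_vp; auto. }
  split; [|split].
  - intros y a Ha.
    set (Q := fun b => rsum (S M) (fun j => c (r + j)%nat * vp N T j y b)).
    assert (HQ : forall a, (a < N)%nat -> vp N T r Q a = 0).
    { intros a' Ha'. unfold Q. rewrite vp_lin.
      rewrite <- (Hc2 y a' Ha').
      replace (S N) with (r + S M)%nat by (unfold M; lia).
      rewrite rsum_split.
      assert (rsum r (fun k => c k * vp N T k y a') = 0).
      { transitivity (rsum r (fun _ => 0)); [|apply rsum_zero]. apply rsum_ext. intros k Hk.
        assert (c k = 0) by (destruct (Req_dec (c k) 0); auto; exfalso; apply (Hr3 k); auto). rewrite H; ring. }
      rewrite H. rewrite Rplus_0_l. apply rsum_ext. intros. rewrite vp_add. reflexivity. }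
    assert (HTQ : forall a, (a < N)%nat -> mapply N T Q a = 0).
    { destruct r as [|k].
      - intros a' Ha'. transitivity (mapply N T (fun _ => 0) a'); [|apply mapply_zero].
        apply mapply_ext. intros b Hb. apply (HQ b Hb).
      - apply (Kpow N T HT k). exact HQ. }
    specialize (HTQ a Ha). unfold Q in HTQ. rewrite mapply_lin in HTQ.
    rewrite rsum_first in HTQ. rewrite Nat.add_0_r in HTQ.
    assert (E1 : mapply N T (mapply N T (mapply N (fun a b => rsum M (fun j => d j * mpow N T j a b)) y)) a
       = rsum M (fun j => d j * vp N T (S (S j)) y a)).
    { transitivity (mapply N T (mapply N T (fun b => rsum M (fun j => d j * vp N T j y b))) a).
      { apply mapply_ext. intros. apply mapply_ext. intros. apply HW. auto. }
      transitivity (mapply N T (fun b => rsum M (fun j => d j * vp N T (S j) y b)) a).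
      { apply mapply_ext. intros. rewrite mapply_lin. reflexivity. }
      rewrite mapply_lin. reflexivity. }
    rewrite E1. unfold d.
    transitivity (rsum M (fun j => (-/ c r) * (c (r + S j)%nat * vp N T (S (S j)) y a))).
    2: { apply rsum_ext. intros. unfold Rdiv. ring. }
    rewrite rsum_scal.
    simpl in HTQ.
    assert (E2 : rsum M (fun j => c (r + S j)%nat * vp N T (S (S j)) y a) = - (c r * mapply N T y a)).
    { change (c r * mapply N T y a + rsum M (fun j => c (r + S j)%nat * vp N T (S (S j)) y a) = 0) in HTQ.
      set (u := rsum M (fun j => c (r + S j)%nat * vp N T (S (S j)) y a)) in *.
      set (w := mapply N T y a) in *. lra. }
    rewrite E2. field. auto.
  - intros S HS x a Ha.
    transitivity (mapply N S (fun b => rsum M (fun j => d j * vp N T j x b)) a).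
    { apply mapply_ext. intros. apply HW. auto. }
    rewrite mapply_lin. rewrite HW by auto. apply rsum_ext. intros.
    rewrite vp_comm with (T := T); auto.
  - intros u v.
    transitivity (vip N (fun b => rsum M (fun j => d j * vp N T j u b)) v).
    { apply vip_ext; auto. }
    transitivity (vip N u (fun b => rsum M (fun j => d j * vp N T j v b))).
    2: { apply vip_ext; auto. intros. symmetry. apply HW. auto. }
    rewrite vip_lin_l, vip_lin_r. apply rsum_ext. intros. rewrite vip_vp_sym; auto.
Qed.


Lemma nsq_sub N u v : nsq N (fun a => u a - v a) <= 2 * nsq N u + 2 * nsq N v.
Proof. unfold nsq, vip. rewrite <- !rsum_scal, <- rsum_plus. apply rsum_le. intros k _.
  pose proof (Rle_0_sqr (u k + v k)). unfold Rsqr in H. lra. Qed.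

Definition commutes N (S T : mat) :=
  forall x a, (a < N)%nat -> mapply N S (mapply N T x) a = mapply N T (mapply N S x) a.

Lemma keyL N T : meq N (mtr T) T -> exists del K, del > 0 /\ K > 0 /\
  forall S, commutes N S T -> frob N (fun p q => S p q - T p q) <= del ->
  forall x, vip N (mapply N T x) x <= K * nsq N (mapply N S x).
Proof.
  intros HT. destruct (Wexists N T HT) as [Wm [HW1 [HW2 HW3]]].
  set (fW := frob N Wm). set (fT := frob N T).
  assert (hW : 0 <= fW) by apply frob_nonneg. assert (hT : 0 <= fT) by apply frob_nonneg.
  exists (/ (4 * (fW + 1))), (2 * (fW + 1) * (fT * fW + 1)).
  split; [apply Rinv_0_lt_compat; lra|]. split; [apply Rmult_lt_0_compat; [lra| nra]|].
  intros S HS Hd x.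
  set (D := fun p q => S p q - T p q) in *.
  assert (HDT : commutes N D T).
  { intros y a Ha. unfold D. rewrite !mapply_mdiff. rewrite HS by auto.
    rewrite <- mapply_minus. apply mapply_ext. intros. rewrite mapply_mdiff. reflexivity. }
  assert (HTT : commutes N T T) by (intros y a Ha; reflexivity).
  set (u := mapply N T x).
  set (fD := frob N D) in *.
  assert (hD : 0 <= fD) by apply frob_nonneg.
  assert (C1 : forall a, (a < N)%nat -> u a =
     mapply N T (mapply N Wm (mapply N S x)) a - mapply N D (mapply N Wm u) a).
  { intros a Ha.
    assert (E1 : mapply N T (mapply N Wm (mapply N S x)) a =
                 mapply N T (mapply N Wm u) a + mapply N T (mapply N Wm (mapply N D x)) a).
    { rewrite <- mapply_plus. apply mapply_ext. intros b Hb. rewrite <- mapply_plus.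
      apply mapply_ext. intros c Hc. unfold u, D. rewrite mapply_mdiff. ring. }
    assert (E2 : mapply N T (mapply N Wm u) a = u a).
    { unfold u. rewrite (HW1 x a Ha). apply mapply_ext. intros b Hb. symmetry. apply HW2; auto. }
    assert (E3 : mapply N T (mapply N Wm (mapply N D x)) a = mapply N D (mapply N Wm u) a).
    { transitivity (mapply N T (mapply N D (mapply N Wm x)) a).
      { apply mapply_ext. intros b Hb. symmetry. apply HW2; auto. }
      rewrite <- HDT by auto. apply mapply_ext. intros b Hb. unfold u. apply HW2; auto. }
    lra. }
  assert (B1 : nsq N u <= 2 * (fT * (fW * nsq N (mapply N S x))) + 2 * (fD * (fW * nsq N u))).
  { transitivity (nsq N (fun a => mapply N T (mapply N Wm (mapply N S x)) a - mapply N D (mapply N Wm u) a)).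
    { right. unfold nsq. apply vip_ext; auto. }
    eapply Rle_trans; [apply nsq_sub|].
    pose proof (mapply_bound N T (mapply N Wm (mapply N S x))).
    pose proof (mapply_bound N Wm (mapply N S x)).
    pose proof (mapply_bound N D (mapply N Wm u)).
    pose proof (mapply_bound N Wm u).
    fold fW fT fD in H, H0, H1, H2.
    assert (fT * nsq N (mapply N Wm (mapply N S x)) <= fT * (fW * nsq N (mapply N S x)))
      by (apply Rmult_le_compat_l; auto).
    assert (fD * nsq N (mapply N Wm u) <= fD * (fW * nsq N u))
      by (apply Rmult_le_compat_l; auto).
    lra. }
  assert (B2 : 2 * (fD * (fW * nsq N u)) <= / 2 * nsq N u).
  { assert (fD * fW <= / (4 * (fW + 1)) * fW) by (apply Rmult_le_compat_r; auto).
    assert (/ (4 * (fW + 1)) * fW <= / 4).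
    { apply (Rmult_le_reg_l (4 * (fW + 1))). lra. field_simplify; lra. }
    pose proof (nsq_nonneg N u).
    assert (fD * fW * nsq N u <= / 4 * nsq N u) by (apply Rmult_le_compat_r; lra).
    lra. }
  assert (B3 : nsq N u <= 4 * (fT * fW) * nsq N (mapply N S x)) by lra.
  assert (V1 : vip N (mapply N T x) x = vip N (mapply N Wm u) u).
  { transitivity (vip N (mapply N T (mapply N T (mapply N Wm x))) x).
    { apply vip_ext; auto. }
    rewrite vip_sym_mat by auto. apply vip_ext; auto.
    }
  apply Rle_trans with (vip N (mapply N Wm u) u); [right; exact V1|]. eapply Rle_trans; [apply vip_le|].
  pose proof (mapply_bound N Wm u). fold fW in H.
  pose proof (nsq_nonneg N u). pose proof (nsq_nonneg N (mapply N S x)).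
  assert (fW * nsq N u <= fW * (4 * (fT * fW) * nsq N (mapply N S x))) by (apply Rmult_le_compat_l; auto).
  assert (0 <= fT * fW * nsq N (mapply N S x)) by (apply Rmult_le_pos; [apply Rmult_le_pos|]; auto).
  assert (0 <= fW * (fT * fW * nsq N (mapply N S x))) by (apply Rmult_le_pos; auto).
  assert (0 <= nsq N (mapply N S x) * (fW * fT)) by (apply Rmult_le_pos; [|apply Rmult_le_pos]; auto).
  replace (2 * (fW + 1) * (fT * fW + 1) * nsq N (mapply N S x)) with
    (2 * fW * (fT * fW * nsq N (mapply N S x)) + 2 * (fT * fW * nsq N (mapply N S x)) + 2 * (fW + 1) * nsq N (mapply N S x)) by ring.
  assert (0 <= 2 * (fW + 1) * nsq N (mapply N S x)) by (apply Rmult_le_pos; lra).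
  lra.
Qed.


Definition mabs N (M : mat) := rsum N (fun a => rsum N (fun b => Rabs (M a b))).

Lemma mabs_nonneg N M : 0 <= mabs N M.
Proof. unfold mabs. apply rsum_nonneg. intros. apply rsum_nonneg. intros. apply Rabs_pos. Qed.

Lemma entry_le_mabs N M a b : (a < N)%nat -> (b < N)%nat -> Rabs (M a b) <= mabs N M.
Proof. intros Ha Hb. unfold mabs.
  apply Rle_trans with (rsum N (fun b => Rabs (M a b))).
  - apply (rsum_term_le N (fun b => Rabs (M a b))); auto. intros; apply Rabs_pos.
  - apply (rsum_term_le N (fun a => rsum N (fun b => Rabs (M a b)))); auto.
    intros; apply rsum_nonneg; intros; apply Rabs_pos.
Qed.

Lemma col_le_mabs N M b : (b < N)%nat -> rsum N (fun l => Rabs (M l b)) <= mabs N M.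
Proof. intros Hb. unfold mabs. rewrite rsum_swap.
  apply (rsum_term_le N (fun b => rsum N (fun a => Rabs (M a b)))); auto.
  intros; apply rsum_nonneg; intros; apply Rabs_pos. Qed.

Lemma mpow_bound N M k a b : (a < N)%nat -> (b < N)%nat -> Rabs (mpow N M k a b) <= (mabs N M) ^ k.
Proof.
  revert a b. induction k; intros a b Ha Hb; simpl.
  - unfold mid. destruct (Nat.eqb a b); rewrite ?Rabs_R1, ?Rabs_R0; lra.
  - unfold mmul. eapply Rle_trans; [apply rsum_abs|].
    apply Rle_trans with (rsum N (fun l => mabs N M ^ k * Rabs (M l b))).
    + apply rsum_le. intros l Hl. rewrite Rabs_mult. apply Rmult_le_compat_r; [apply Rabs_pos|]. apply IHk; auto.
    + rewrite rsum_scal. rewrite Rmult_comm. apply Rmult_le_compat_r.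
      * apply pow_le. apply mabs_nonneg.
      * apply col_le_mabs; auto.
Qed.

Lemma mabs_scale N t X : mabs N (mscale t X) = Rabs t * mabs N X.
Proof. unfold mabs, mscale. rewrite <- rsum_scal. apply rsum_ext. intros.
  rewrite <- rsum_scal. apply rsum_ext. intros. apply Rabs_mult. Qed.

Lemma series_rem (f : nat -> R) s : 0 <= s <= /2 -> (forall k, Rabs (f k) <= s ^ k) ->
  forall m, Rabs (sum_f_R0 f (S m) - f O - f 1%nat) <= 2 * s ^ 2 - 2 * s ^ (m + 2).
Proof.
  intros Hs Hf m. induction m.
  - simpl. replace (f 0%nat + f 1%nat - f 0%nat - f 1%nat) with 0 by ring. rewrite Rabs_R0. lra.
  - change (sum_f_R0 f (S (S m))) with (sum_f_R0 f (S m) + f (S (S m))).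
    replace (sum_f_R0 f (S m) + f (S (S m)) - f 0%nat - f 1%nat) with
      ((sum_f_R0 f (S m) - f 0%nat - f 1%nat) + f (S (S m))) by ring.
    eapply Rle_trans; [apply Rabs_triang|].
    pose proof (Hf (S (S m))).
    replace (s ^ S (S m)) with (s ^ (m + 2)) in H by (f_equal; lia).
    replace (S m + 2)%nat with (S (m + 2)) by lia. change (s ^ S (m + 2)) with (s * s ^ (m + 2)).
    assert (0 <= s ^ (m + 2)) by (apply pow_le; lra).
    assert (s * s ^ (m+2) <= /2 * s ^ (m+2)) by (apply Rmult_le_compat_r; lra).
    lra.
Qed.

Lemma lim_bound u l c K : Un_cv u l -> (forall m, Rabs (u (S m) - c) <= K) -> Rabs (l - c) <= K.
Proof.
  intros Hu Hb. destruct (Rle_dec (Rabs (l - c)) K) as [|Hn]; auto. exfalso.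
  destruct (Hu (Rabs (l - c) - K)) as [N0 HN]; [lra|].
  specialize (HN (S N0) ltac:(lia)). unfold Rdist in HN. specialize (Hb N0).
  assert (Rabs (l - c) <= Rabs (u (S N0) - c) + Rabs (u (S N0) - l)).
  { replace (l - c) with ((u (S N0) - c) - (u (S N0) - l)) by ring.
    eapply Rle_trans; [apply Rabs_triang|]. rewrite Rabs_Ropp. lra. }
  lra.
Qed.

Lemma mid_mul_l N Y a b : (a < N)%nat -> mmul N mid Y a b = Y a b.
Proof. intros Ha. unfold mmul, mid. apply (rsum_delta N a (fun l => Y l b)). auto. Qed.

Lemma exp_expand N X t E a b : (a < N)%nat -> (b < N)%nat -> mexp_is N (mscale t X) E ->
  Rabs t * mabs N X <= /2 -> Rabs (E a b - mid a b - t * X a b) <= 2 * (Rabs t * mabs N X) ^ 2.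
Proof.
  intros Ha Hb HE Hs.
  set (Y := mscale t X).
  set (s := Rabs t * mabs N X) in *.
  assert (hs : 0 <= s) by (apply Rmult_le_pos; [apply Rabs_pos|apply mabs_nonneg]).
  set (f := fun k => mpow N Y k a b / INR (fact k)).
  assert (Hf : forall k, Rabs (f k) <= s ^ k).
  { intros k. unfold f. unfold Rdiv. rewrite Rabs_mult.
    assert (1 <= INR (fact k)) by (apply (le_INR 1); apply lt_O_fact).
    rewrite Rabs_inv, (Rabs_pos_eq (INR (fact k))) by lra.
    assert (Rabs (mpow N Y k a b) <= s ^ k).
    { unfold s. rewrite <- mabs_scale. apply mpow_bound; auto. }
    assert (0 < / INR (fact k) <= 1).
    { split. apply Rinv_0_lt_compat; lra. rewrite <- Rinv_1. apply Rinv_le_contravar; lra. }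
    assert (0 <= Rabs (mpow N Y k a b)) by apply Rabs_pos.
    apply Rle_trans with (Rabs (mpow N Y k a b) * 1); [apply Rmult_le_compat_l; lra| lra]. }
  assert (F0 : f O = mid a b) by (unfold f; simpl; field).
  assert (F1 : f 1%nat = t * X a b) by (unfold f; simpl; rewrite mid_mul_l by auto; unfold Y, mscale; field).
  replace (E a b - mid a b - t * X a b) with (E a b - (mid a b + t * X a b)) by ring.
  apply lim_bound with (u := fun m => sum_f_R0 f m).
  - apply HE; auto.
  - intros m. rewrite <- F0, <- F1.
    replace (sum_f_R0 f (S m) - (f 0%nat + f 1%nat)) with (sum_f_R0 f (S m) - f 0%nat - f 1%nat) by ring.
    eapply Rle_trans; [apply series_rem; [split; [exact hs|exact Hs]|exact Hf]|].
    assert (0 <= s ^ (m + 2)) by (apply pow_le; lra). lra.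
Qed.

Lemma prod3 t x y mu rho : 0 <= t -> Rabs x <= mu -> Rabs y <= rho -> Rabs (t * x * y) <= t * mu * rho.
Proof. intros Ht Hx Hy. rewrite !Rabs_mult, (Rabs_pos_eq t) by auto.
  apply Rmult_le_compat; [apply Rmult_le_pos; [auto|apply Rabs_pos]|apply Rabs_pos| |auto].
  apply Rmult_le_compat_l; auto. Qed.

Lemma prod2 x y rho : Rabs x <= rho -> Rabs y <= rho -> Rabs (x * y) <= rho * rho.
Proof. intros Hx Hy. rewrite Rabs_mult. apply Rmult_le_compat; auto; apply Rabs_pos. Qed.

Lemma abs6 a b c d e f : Rabs (a + b + c + (d + e + f)) <= Rabs a + Rabs b + Rabs c + Rabs d + Rabs e + Rabs f.
Proof.
  eapply Rle_trans; [apply Rabs_triang|].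
  pose proof (Rabs_triang (a + b) c). pose proof (Rabs_triang a b).
  pose proof (Rabs_triang (d + e) f). pose proof (Rabs_triang d e). lra.
Qed.

Lemma rest_bound t mu rho xa xb ya yb ra rb sa sb : 0 <= t ->
  Rabs xa <= mu -> Rabs xb <= mu -> Rabs ya <= mu -> Rabs yb <= mu ->
  Rabs ra <= rho -> Rabs rb <= rho -> Rabs sa <= rho -> Rabs sb <= rho ->
  Rabs ((t*xa+ra)*(t*yb+sb) - (t*ya+sa)*(t*xb+rb) - t^2*(xa*yb - ya*xb)) <= 4*t*mu*rho + 2*(rho*rho).
Proof.
  intros Ht H1 H2 H3 H4 H5 H6 H7 H8.
  replace ((t*xa+ra)*(t*yb+sb) - (t*ya+sa)*(t*xb+rb) - t^2*(xa*yb - ya*xb)) with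
    (t*xa*sb + t*yb*ra + ra*sb + (- (t*ya*rb) + - (t*xb*sa) + - (sa*rb))) by ring.
  eapply Rle_trans; [apply abs6|]. rewrite !Rabs_Ropp.
  pose proof (prod3 t xa sb mu rho Ht H1 H8).
  pose proof (prod3 t yb ra mu rho Ht H4 H5).
  pose proof (prod3 t ya rb mu rho Ht H3 H6).
  pose proof (prod3 t xb sa mu rho Ht H2 H7).
  pose proof (prod2 ra sb rho H5 H8).
  pose proof (prod2 sa rb rho H7 H6).
  lra.
Qed.

Lemma small_zero D t0 K : t0 > 0 -> K >= 0 -> (forall t, 0 < t <= t0 -> Rabs D <= t * K) -> D = 0.
Proof.
  intros Ht0 HK H. destruct (Req_dec D 0) as [|HD]; auto. exfalso.
  assert (hD : Rabs D > 0) by (apply Rabs_pos_lt; auto).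
  set (t := Rmin t0 (Rabs D / (2 * (K + 1)))).
  assert (Hpos : 0 < Rabs D / (2 * (K + 1))) by (apply Rdiv_lt_0_compat; lra).
  assert (Ht : 0 < t) by (unfold t; apply Rmin_glb_lt; lra).
  assert (Ht1 : t <= t0) by apply Rmin_l.
  assert (Ht2 : t <= Rabs D / (2 * (K + 1))) by apply Rmin_r.
  specialize (H t (conj Ht Ht1)).
  assert (t * K <= Rabs D / (2 * (K + 1)) * K) by (apply Rmult_le_compat_r; lra).
  assert (Rabs D / (2 * (K + 1)) * K < Rabs D).
  { apply (Rmult_lt_reg_l (2 * (K + 1))); [lra|]. field_simplify; [|lra]. 
    assert (0 < Rabs D * K + Rabs D * (K + 2)) by (assert (0 <= Rabs D * K) by (apply Rmult_le_pos; lra); assert (0 < Rabs D * (K+2)) by (apply Rmult_lt_0_compat; lra); lra).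
    lra. }
  lra.
Qed.

Lemma rsum_delta_r N b g : (b < N)%nat -> rsum N (fun l => g l * (if Nat.eqb l b then 1 else 0)) = g b.
Proof. intros Hb. rewrite <- (rsum_delta N b g Hb). apply rsum_ext. intros l Hl.
  rewrite (Nat.eqb_sym l b). ring. Qed.

Lemma comm_exp N X Y (GP : mat -> Prop) :
  (forall t, exists E, mexp_is N (mscale t X) E /\ GP E) ->
  (forall t, exists E, mexp_is N (mscale t Y) E /\ GP E) ->
  (forall A B, GP A -> GP B -> meq N (mmul N A B) (mmul N B A)) ->
  meq N (mmul N X Y) (mmul N Y X).
Proof.
  intros HX HY HG a b Ha Hb.
  set (mu := mabs N X + mabs N Y + 1).
  assert (hX := mabs_nonneg N X). assert (hY := mabs_nonneg N Y).
  assert (hmu : mu >= 1) by (unfold mu; lra).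
  apply Rminus_diag_uniq.
  apply (small_zero _ (Rmin 1 (/ (2 * mu))) (8 * INR N * (mu ^ 3 + mu ^ 4))).
  { apply Rmin_glb_lt; [lra|apply Rinv_0_lt_compat; lra]. }
  { assert (0 <= INR N) by apply pos_INR. assert (0 <= mu^3) by (apply pow_le; lra).
    assert (0 <= mu^4) by (apply pow_le; lra).
    assert (0 <= INR N * (mu ^ 3 + mu ^ 4)) by (apply Rmult_le_pos; lra). lra. }
  intros t [Ht0 Ht].
  assert (Ht1 : t <= 1) by (eapply Rle_trans; [exact Ht|apply Rmin_l]).
  assert (Ht2 : t <= / (2 * mu)) by (eapply Rle_trans; [exact Ht|apply Rmin_r]).
  assert (Htmu : t * mu <= / 2).
  { apply Rle_trans with (/ (2 * mu) * mu). apply Rmult_le_compat_r; lra. right. field. lra. }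
  destruct (HX t) as [E [HE GE]]. destruct (HY t) as [F [HF GF]].
  set (rho := 2 * (t * mu) ^ 2).
  assert (hrho : 0 <= rho) by (unfold rho; apply Rmult_le_pos; [lra|apply pow2_ge_0]).
  assert (BE : forall i j, (i < N)%nat -> (j < N)%nat -> Rabs (E i j - mid i j - t * X i j) <= rho).
  { intros i j Hi Hj.
    assert (Hm : Rabs t * mabs N X <= / 2).
    { rewrite Rabs_pos_eq by lra. apply Rle_trans with (t * mu); [apply Rmult_le_compat_l; unfold mu; lra|lra]. }
    pose proof (exp_expand N X t E i j Hi Hj HE Hm) as H0.
    eapply Rle_trans; [exact H0|].
    unfold rho. rewrite Rabs_pos_eq by lra. apply Rmult_le_compat_l; [lra|].
    apply pow_incr. split. apply Rmult_le_pos; lra. apply Rmult_le_compat_l; unfold mu; lra. }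
  assert (BF : forall i j, (i < N)%nat -> (j < N)%nat -> Rabs (F i j - mid i j - t * Y i j) <= rho).
  { intros i j Hi Hj.
    assert (Hm : Rabs t * mabs N Y <= / 2).
    { rewrite Rabs_pos_eq by lra. apply Rle_trans with (t * mu); [apply Rmult_le_compat_l; unfold mu; lra|lra]. }
    pose proof (exp_expand N Y t F i j Hi Hj HF Hm) as H0.
    eapply Rle_trans; [exact H0|].
    unfold rho. rewrite Rabs_pos_eq by lra. apply Rmult_le_compat_l; [lra|].
    apply pow_incr. split. apply Rmult_le_pos; lra. apply Rmult_le_compat_l; unfold mu; lra. }
  assert (MX : forall i j, (i < N)%nat -> (j < N)%nat -> Rabs (X i j) <= mu).
  { intros i j Hi Hj. pose proof (entry_le_mabs N X i j Hi Hj). unfold mu; lra. }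
  assert (MY : forall i j, (i < N)%nat -> (j < N)%nat -> Rabs (Y i j) <= mu).
  { intros i j Hi Hj. pose proof (entry_le_mabs N Y i j Hi Hj). unfold mu; lra. }
  set (e := fun i j => E i j - mid i j). set (f := fun i j => F i j - mid i j).
  assert (K0 : rsum N (fun l => e a l * f l b - f a l * e l b) = 0).
  { pose proof (HG E F GE GF a b Ha Hb) as HC. unfold mmul in HC.
    assert (rsum N (fun l => E a l * F l b) - rsum N (fun l => F a l * E l b) = 0) by lra.
    rewrite <- rsum_minus in H.
    rewrite <- H. symmetry.
    transitivity (rsum N (fun l => (e a l * f l b - f a l * e l b) + (mid a l * (f l b - e l b) + (e a l - f a l) * mid l b))).
    { apply rsum_ext. intros. unfold e, f. ring. }
    rewrite rsum_plus, rsum_plus.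
    unfold mid. rewrite (rsum_delta N a (fun l => f l b - e l b)) by auto.
    rewrite (rsum_delta_r N b (fun l => e a l - f a l)) by auto. ring. }
  assert (K1 : t^2 * (mmul N X Y a b - mmul N Y X a b) =
     - rsum N (fun l => e a l * f l b - f a l * e l b - t^2 * (X a l * Y l b - Y a l * X l b))).
  { rewrite rsum_minus, K0. unfold mmul. rewrite rsum_scal, rsum_minus. ring. }
  assert (K2 : Rabs (t^2 * (mmul N X Y a b - mmul N Y X a b)) <= INR N * (4*t*mu*rho + 2*(rho*rho))).
  { rewrite K1, Rabs_Ropp. eapply Rle_trans; [apply rsum_abs|]. rewrite <- rsum_const.
    apply rsum_le. intros l Hl.
    replace (e a l * f l b - f a l * e l b - t^2 * (X a l * Y l b - Y a l * X l b)) with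
      ((t * X a l + (e a l - t * X a l)) * (t * Y l b + (f l b - t * Y l b)) -
       (t * Y a l + (f a l - t * Y a l)) * (t * X l b + (e l b - t * X l b)) -
       t^2 * (X a l * Y l b - Y a l * X l b)) by ring.
    apply rest_bound; auto; try lra; unfold e, f; auto. }
  rewrite Rabs_mult, (Rabs_pos_eq (t^2)) in K2 by apply pow2_ge_0.
  apply (Rmult_le_reg_l (t^2)); [apply pow_lt; lra|].
  eapply Rle_trans; [exact K2|].
  unfold rho.
  assert (0 <= INR N) by apply pos_INR.
  replace (t ^ 2 * (t * (8 * INR N * (mu ^ 3 + mu ^ 4))) - INR N * (4 * t * mu * (2 * (t * mu) ^ 2) + 2 * (2 * (t * mu) ^ 2 * (2 * (t * mu) ^ 2))))
    with (8 * INR N * mu ^ 4 * t ^ 3 * (1 - t)) by ring.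
  assert (0 <= 8 * INR N * mu ^ 4 * t ^ 3 * (1 - t)).
  { repeat apply Rmult_le_pos; try lra; apply pow_le; lra. }
  lra.
Qed.


Lemma inv_small eps : eps > 0 -> exists K : nat, forall k, (K <= k)%nat -> / (INR k + 1) < eps.
Proof.
  intros He. destruct (INR_unbounded (/ eps)) as [K HK]. exists K. intros k Hk.
  apply le_INR in Hk. assert (0 < / eps) by (apply Rinv_0_lt_compat; lra).
  assert (/ eps < INR k + 1) by lra.
  replace eps with (/ / eps) by (field; lra).
  apply Rinv_lt_contravar; [apply Rmult_lt_0_compat; lra|lra].
Qed.

Lemma BW1 (u : nat -> R) : (forall k, Rabs (u k) <= 1) ->
  exists l (sg : nat -> nat), (forall k, (sg k < sg (S k))%nat) /\ Un_cv (fun k => u (sg k)) l.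
Proof.
  intros Hu.
  destruct (Bolzano_Weierstrass u (fun c => -1 <= c <= 1) (compact_P3 (-1) 1)) as [l Hl].
  { intros n. specialize (Hu n). unfold Rabs in Hu; destruct (Rcase_abs (u n)); lra. }
  assert (Hpick : forall N0 k, exists p, (N0 <= p)%nat /\ Rabs (u p - l) < / (INR k + 1)).
  { intros N0 k.
    assert (hp : 0 < / (INR k + 1)) by (apply Rinv_0_lt_compat; pose proof (pos_INR k); lra).
    destruct (Hl (disc l (mkposreal _ hp)) N0) as [p [Hp1 Hp2]].
    { exists (mkposreal _ hp). intros y Hy. exact Hy. }
    exists p. split; auto. }
  set (g := fun N0 k => proj1_sig (constructive_indefinite_description _ (Hpick N0 k))).
  assert (Hg : forall N0 k, (N0 <= g N0 k)%nat /\ Rabs (u (g N0 k) - l) < / (INR k + 1)).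
  { intros. unfold g. apply proj2_sig. }
  set (sg := fix s k := match k with O => g O O | S k' => g (S (s k')) (S k') end).
  exists l, sg. split.
  - intros k. simpl. destruct (Hg (S (sg k)) (S k)). lia.
  - intros eps He. destruct (inv_small eps He) as [K HK]. exists K. intros k Hk.
    unfold R_dist. apply Rle_lt_trans with (/ (INR k + 1)); [|apply HK; lia].
    destruct k; simpl; left; apply Hg.
Qed.

Lemma sg_ge (sg : nat -> nat) : (forall k, (sg k < sg (S k))%nat) -> forall k, (k <= sg k)%nat.
Proof. intros H k. induction k; [lia|]. specialize (H k). lia. Qed.

Lemma sg_mono (sg : nat -> nat) : (forall k, (sg k < sg (S k))%nat) -> forall j k, (j <= k)%nat -> (sg j <= sg k)%nat.
Proof. intros H j k Hjk. induction Hjk; [lia|]. specialize (H m). lia. Qed.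

Lemma subseq_cv u l (sg : nat -> nat) : (forall k, (sg k < sg (S k))%nat) -> Un_cv u l -> Un_cv (fun k => u (sg k)) l.
Proof.
  intros Hs Hu eps He. destruct (Hu eps He) as [K HK]. exists K. intros k Hk.
  apply HK. pose proof (sg_ge sg Hs k). lia.
Qed.

Lemma BWn n (u : nat -> nat -> R) : (forall k i, (i < n)%nat -> Rabs (u k i) <= 1) ->
  exists (l : nat -> R) (sg : nat -> nat), (forall k, (sg k < sg (S k))%nat) /\
    forall i, (i < n)%nat -> Un_cv (fun k => u (sg k) i) (l i).
Proof.
  induction n; intros Hu.
  - exists (fun _ => 0), (fun k => k). split; [intros; lia|]. intros; lia.
  - destruct IHn as [l [sg [Hs Hl]]]. { intros. apply Hu. lia. }
    destruct (BW1 (fun k => u (sg k) n)) as [l' [tau [Ht Hl']]]. { intros. apply Hu. lia. }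
    exists (fun i => if Nat.eqb i n then l' else l i), (fun k => sg (tau k)). split.
    + intros k. specialize (Ht k). pose proof (sg_mono sg Hs (S (tau k)) (tau (S k)) Ht). specialize (Hs (tau k)). lia.
    + intros i Hi. destruct (Nat.eqb i n) eqn:E.
      * apply Nat.eqb_eq in E. subst. exact Hl'.
      * apply Nat.eqb_neq in E. apply (subseq_cv (fun k => u (sg k) i) (l i) tau Ht). apply Hl. lia.
Qed.

Lemma rsum_cv n (f : nat -> nat -> R) (l : nat -> R) : (forall i, (i < n)%nat -> Un_cv (fun k => f k i) (l i)) ->
  Un_cv (fun k => rsum n (f k)) (rsum n l).
Proof.
  induction n; intros H; simpl.
  - intros eps He. exists O. intros. unfold R_dist. rewrite Rminus_0_r, Rabs_R0. lra.
  - apply CV_plus. apply IHn. intros; apply H; lia. apply H. lia.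
Qed.


Definition aa N (Xs : nat -> mat) x i := vip N (mapply N (Xs i) x) x.
Definition combo n (Xs : nat -> mat) (c : nat -> R) : mat := fun p q => rsum n (fun i => c i * Xs i p q).

Section Combo.
Variables (N n : nat) (Xs : nat -> mat).
Hypothesis Hsym : forall i, (i < n)%nat -> meq N (mtr (Xs i)) (Xs i).
Hypothesis Hcom : forall i j, (i < n)%nat -> (j < n)%nat -> meq N (mmul N (Xs i) (Xs j)) (mmul N (Xs j) (Xs i)).

Lemma combo_apply c x a : mapply N (combo n Xs c) x a = rsum n (fun i => c i * mapply N (Xs i) x a).
Proof. apply mapply_msum. Qed.

Lemma Xcomm i j x a : (i < n)%nat -> (j < n)%nat -> (a < N)%nat ->
  mapply N (Xs i) (mapply N (Xs j) x) a = mapply N (Xs j) (mapply N (Xs i) x) a.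
Proof.
  intros Hi Hj Ha. rewrite <- !mapply_mmul. unfold mapply. apply rsum_ext. intros b Hb.
  rewrite (Hcom i j Hi Hj a b Ha Hb). reflexivity.
Qed.

Lemma combo_comm c d : commutes N (combo n Xs c) (combo n Xs d).
Proof.
  intros x a Ha. rewrite !combo_apply.
  transitivity (rsum n (fun i => c i * rsum n (fun j => d j * mapply N (Xs i) (mapply N (Xs j) x) a))).
  { apply rsum_ext. intros i Hi. f_equal. rewrite <- mapply_lin. apply mapply_ext. intros. apply combo_apply. }
  transitivity (rsum n (fun i => d i * rsum n (fun j => c j * mapply N (Xs i) (mapply N (Xs j) x) a))).
  2: { apply rsum_ext. intros i Hi. f_equal. rewrite <- mapply_lin. apply mapply_ext. intros. symmetry. apply combo_apply. }
  transitivity (rsum n (fun i => rsum n (fun j => c i * d j * mapply N (Xs i) (mapply N (Xs j) x) a))).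
  { apply rsum_ext. intros. rewrite <- rsum_scal. apply rsum_ext. intros. ring. }
  rewrite rsum_swap. apply rsum_ext. intros j Hj. rewrite <- rsum_scal. apply rsum_ext. intros i Hi.
  rewrite Xcomm by auto. ring.
Qed.

Lemma combo_sym c : meq N (mtr (combo n Xs c)) (combo n Xs c).
Proof.
  intros p q Hp Hq. unfold mtr, combo. apply rsum_ext. intros i Hi.
  rewrite <- (Hsym i Hi q p Hq Hp). reflexivity.
Qed.

Definition FX := rsum n (fun i => frob N (Xs i)).

Lemma FX_nonneg : 0 <= FX.
Proof. apply rsum_nonneg. intros. apply frob_nonneg. Qed.

Lemma combo_frob c d : frob N (fun p q => combo n Xs c p q - combo n Xs d p q) <=
  rsum n (fun i => (c i - d i) * (c i - d i)) * FX.
Proof.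
  unfold frob, FX.
  transitivity (rsum N (fun p => rsum N (fun q => rsum n (fun i => (c i - d i) * (c i - d i)) *
     rsum n (fun i => Xs i p q * Xs i p q)))).
  - apply rsum_le. intros p Hp. apply rsum_le. intros q Hq.
    assert (E : combo n Xs c p q - combo n Xs d p q = rsum n (fun i => (c i - d i) * Xs i p q)).
    { unfold combo. rewrite <- rsum_minus. apply rsum_ext. intros; ring. }
    rewrite E. pose proof (CS n (fun i => c i - d i) (fun i => Xs i p q)). simpl in H. lra.
  - right. set (r := rsum n (fun i => (c i - d i) * (c i - d i))).
    transitivity (r * rsum N (fun p => rsum N (fun q => rsum n (fun i => Xs i p q * Xs i p q)))).
    { rewrite <- rsum_scal. apply rsum_ext. intros. rewrite <- rsum_scal. reflexivity. }
    f_equal.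
    transitivity (rsum N (fun p => rsum n (fun i => rsum N (fun q => Xs i p q * Xs i p q)))).
    { apply rsum_ext. intros. apply rsum_swap. }
    apply rsum_swap.
Qed.

Lemma combo_vip c x : vip N (mapply N (combo n Xs c) x) x = rsum n (fun i => c i * aa N Xs x i).
Proof.
  transitivity (vip N (fun a => rsum n (fun i => c i * mapply N (Xs i) x a)) x).
  { apply vip_ext; auto. intros. apply combo_apply. }
  rewrite vip_lin_l. reflexivity.
Qed.

Lemma aa_scale t x i : aa N Xs (fun b => t * x b) i = t^2 * aa N Xs x i.
Proof.
  unfold aa, vip. rewrite <- rsum_scal. apply rsum_ext. intros a Ha.
  rewrite mapply_scal. ring.
Qed.

Lemma phi_aa x : phi N n Xs x = rsum n (fun i => aa N Xs x i * aa N Xs x i).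
Proof. unfold phi, aa. apply rsum_ext. intros. ring. Qed.

Lemma phi_nonneg x : 0 <= phi N n Xs x.
Proof. rewrite phi_aa. apply rsum_nonneg. intros. apply Rle_0_sqr. Qed.

Lemma Bx_scale t x a : mapply N (combo n Xs (aa N Xs (fun b => t * x b))) (fun b => t * x b) a =
  t^3 * mapply N (combo n Xs (aa N Xs x)) x a.
Proof.
  rewrite !combo_apply. rewrite <- rsum_scal. apply rsum_ext. intros i Hi.
  rewrite aa_scale, mapply_scal. ring.
Qed.

Lemma nsq_scale t (v : vec) : nsq N (fun a => t * v a) = t^2 * nsq N v.
Proof. unfold nsq, vip. rewrite <- rsum_scal. apply rsum_ext. intros. ring. Qed.

Definition Bx x := mapply N (combo n Xs (aa N Xs x)) x.

Lemma main_ineq : exists K, K > 0 /\ forall x, (phi N n Xs x)^3 <= K * (nsq N (Bx x))^2.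
Proof.
  destruct (classic (exists K, K > 0 /\ forall x, (phi N n Xs x)^3 <= K * (nsq N (Bx x))^2)) as [H|Hno]; auto.
  exfalso.
  assert (H1 : forall m : nat, exists y, phi N n Xs y = 1 /\ (INR m + 1) * (nsq N (Bx y))^2 < 1).
  { intros m.
    assert (hm : INR m + 1 > 0) by (pose proof (pos_INR m); lra).
    destruct (not_all_ex_not _ _ (fun H => Hno (ex_intro _ (INR m + 1) (conj hm H)))) as [x Hx].
    apply Rnot_le_lt in Hx.
    set (ph := phi N n Xs x) in *. set (q := nsq N (Bx x)) in *.
    assert (hq : 0 <= q) by apply nsq_nonneg.
    assert (hph : 0 <= ph) by apply phi_nonneg.
    assert (0 <= (INR m + 1) * q^2) by (apply Rmult_le_pos; [lra|apply pow2_ge_0]).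
    assert (hph' : 0 < ph).
    { destruct (Req_dec ph 0) as [E|E]; [|lra]. rewrite E in Hx. simpl in Hx. lra. }
    set (s := sqrt (sqrt ph)).
    assert (hs : 0 < s) by (apply sqrt_lt_R0, sqrt_lt_R0; auto).
    assert (hs4 : s^4 = ph).
    { unfold s. replace 4%nat with (2*2)%nat by lia. rewrite pow_mult.
      simpl. rewrite !Rmult_1_r. rewrite sqrt_sqrt by (apply sqrt_pos). apply sqrt_sqrt. lra. }
    set (t := / s).
    exists (fun b => t * x b). split.
    - rewrite phi_aa.
      transitivity (rsum n (fun i => t^4 * (aa N Xs x i * aa N Xs x i))).
      { apply rsum_ext. intros. rewrite aa_scale. ring. }
      rewrite rsum_scal, <- phi_aa. fold ph. rewrite <- hs4. unfold t. field. lra.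
    - assert (E : nsq N (Bx (fun b => t * x b)) = t^6 * q).
      { unfold q. transitivity (nsq N (fun a => t^3 * Bx x a)).
        { unfold nsq. apply vip_ext; intros; apply Bx_scale. }
        rewrite nsq_scale. ring. }
      rewrite E.
      replace ((INR m + 1) * (t ^ 6 * q) ^ 2) with (t^12 * ((INR m + 1) * q^2)) by ring.
      assert (ht : 0 < t^12) by (apply pow_lt; unfold t; apply Rinv_0_lt_compat; auto).
      apply Rlt_le_trans with (t^12 * ph^3).
      + apply Rmult_lt_compat_l; auto.
      + right. rewrite <- hs4. unfold t. field. lra. }
  assert (H2 : exists ys : nat -> vec, forall m, phi N n Xs (ys m) = 1 /\ (INR m + 1) * (nsq N (Bx (ys m)))^2 < 1).
  { exists (fun m => proj1_sig (constructive_indefinite_description _ (H1 m))).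
    intros m. apply (proj2_sig (constructive_indefinite_description _ (H1 m))). }
  destruct H2 as [ys Hys].
  set (am := fun m i => aa N Xs (ys m) i).
  assert (Hsum1 : forall m, rsum n (fun i => am m i * am m i) = 1).
  { intros m. unfold am. rewrite <- phi_aa. apply Hys. }
  assert (Hb : forall k i, (i < n)%nat -> Rabs (am k i) <= 1).
  { intros k i Hi. pose proof (rsum_term_le n (fun i => am k i * am k i) i) as Ht.
    rewrite Hsum1 in Ht. assert (am k i * am k i <= 1) by (apply Ht; auto; intros; apply Rle_0_sqr).
    rewrite <- (Rabs_pos_eq 1) by lra. apply Rsqr_le_abs_0. unfold Rsqr. lra. }
  destruct (BWn n am Hb) as [l [sg [Hsg Hl]]].
  destruct (keyL N (combo n Xs l) (combo_sym l)) as [del [K [hdel [hK HL]]]].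
  assert (C1 : Un_cv (fun k => rsum n (fun i => (am (sg k) i - l i) * (am (sg k) i - l i))) 0).
  { replace 0 with (rsum n (fun i => (l i - l i) * (l i - l i))).
    - apply (rsum_cv n (fun k i => (am (sg k) i - l i) * (am (sg k) i - l i))). intros i Hi.
      apply CV_mult; apply CV_minus; auto; intros eps He; exists O; intros; unfold R_dist; rewrite Rminus_diag, Rabs_R0; lra.
    - transitivity (rsum n (fun _ => 0)); [|apply rsum_zero]. apply rsum_ext. intros; ring. }
  assert (C2 : Un_cv (fun k => rsum n (fun i => l i * am (sg k) i)) (rsum n (fun i => l i * l i))).
  { apply (rsum_cv n (fun k i => l i * am (sg k) i)). intros i Hi.
    apply CV_mult; auto. intros eps He; exists O; intros; unfold R_dist; rewrite Rminus_diag, Rabs_R0; lra. }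
  assert (C3 : rsum n (fun i => l i * l i) = 1).
  { apply (UL_sequence (fun k => rsum n (fun i => am (sg k) i * am (sg k) i))).
    - apply (rsum_cv n (fun k i => am (sg k) i * am (sg k) i)). intros i Hi. apply CV_mult; auto.
    - intros eps He; exists O; intros; unfold R_dist. rewrite Hsum1. rewrite Rminus_diag, Rabs_R0; lra. }
  rewrite C3 in C2.
  assert (hFX := FX_nonneg).
  destruct (C1 (del / (FX + 1))) as [k1 Hk1]. { apply Rdiv_lt_0_compat; lra. }
  destruct (C2 (/2)) as [k2 Hk2]. { lra. }
  destruct (INR_unbounded (4 * K * K)) as [k3 Hk3].
  set (k := (k1 + k2 + k3)%nat).
  specialize (Hk1 k ltac:(unfold k; lia)). specialize (Hk2 k ltac:(unfold k; lia)).
  unfold R_dist in Hk1, Hk2. rewrite Rminus_0_r in Hk1.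
  set (y := ys (sg k)).
  set (S := combo n Xs (am (sg k))).
  assert (D1 : frob N (fun p q => S p q - combo n Xs l p q) <= del).
  { eapply Rle_trans; [apply combo_frob|].
    set (r := rsum n (fun i => (am (sg k) i - l i) * (am (sg k) i - l i))) in *.
    assert (hr : 0 <= r) by (apply rsum_nonneg; intros; apply Rle_0_sqr).
    rewrite Rabs_pos_eq in Hk1 by auto.
    apply Rle_trans with (del / (FX + 1) * FX). apply Rmult_le_compat_r; lra.
    apply (Rmult_le_reg_l (FX + 1)); [lra|]. field_simplify; [|lra].
    assert (0 <= del * FX) by (apply Rmult_le_pos; lra). lra. }
  pose proof (HL S (combo_comm (am (sg k)) l) D1 y) as HLy.
  rewrite combo_vip in HLy.
  assert (E1 : rsum n (fun i => l i * aa N Xs y i) > /2).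
  { assert (rsum n (fun i => l i * aa N Xs y i) = rsum n (fun i => l i * am (sg k) i)) by reflexivity.
    apply Rabs_def2 in Hk2. lra. }
  destruct (Hys (sg k)) as [_ Hq]. fold y in Hq.
  assert (ES : mapply N S y = Bx y) by reflexivity.
  rewrite ES in HLy.
  set (q := nsq N (Bx y)) in *.
  assert (hq : 0 <= q) by apply nsq_nonneg.
  assert (hk : INR k <= INR (sg k)) by (apply le_INR; apply sg_ge; auto).
  assert (hk3 : INR k3 <= INR k) by (apply le_INR; unfold k; lia).
  assert (Hq2 : 4 * K * K * q^2 < 1).
  { apply Rle_lt_trans with ((INR (sg k) + 1) * q^2); [|exact Hq].
    apply Rmult_le_compat_r; [apply pow2_ge_0|lra]. }
  assert (K * q < /2).
  { destruct (Rlt_le_dec (K * q) (/2)) as [|Hc]; auto. exfalso.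
    assert (/2 * /2 <= (K * q) * (K * q)) by (apply Rmult_le_compat; lra).
    replace (4 * K * K * q ^ 2) with (4 * ((K * q) * (K * q))) in Hq2 by ring. lra. }
  lra.
Qed.

End Combo.


Theorem mainTheorem19 (N : nat) (G : mat -> Prop)
  (HG : closed_subgroup_GL N G) (Htr : transpose_invariant G)
  (Hcomm : commutative_group N G)
  (n : nat) (Xs : nat -> mat) (Hbasis : orthonormal_basis N G n Xs) :
  exists C : R, C > 0 /\
    forall x : vec, C * powr (vnorm N (grad_phi N n Xs x)) (4 / 3) >= phi N n Xs x.
Proof.
  destruct Hbasis as [Hp _].
  assert (Hsym : forall i, (i < n)%nat -> meq N (mtr (Xs i)) (Xs i)) by (intros i Hi; apply (Hp i Hi)).
  assert (Hcom : forall i j, (i < n)%nat -> (j < n)%nat -> meq N (mmul N (Xs i) (Xs j)) (mmul N (Xs j) (Xs i))).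
  { intros i j Hi Hj. apply (comm_exp N (Xs i) (Xs j) G); [apply (Hp i Hi)|apply (Hp j Hj)|exact Hcomm]. }
  destruct (main_ineq N n Xs Hsym Hcom) as [K [hK HK]].
  set (C := Rpower (K / 256) (/3)).
  assert (hC : C > 0) by (unfold C, Rpower; apply exp_pos).
  exists C. split; auto. intros x.
  set (q := nsq N (Bx N n Xs x)).
  assert (hq : 0 <= q) by apply nsq_nonneg.
  assert (Eg : vnorm N (grad_phi N n Xs x) = sqrt (16 * q)).
  { unfold vnorm. f_equal. unfold q, nsq, vip. rewrite <- rsum_scal. apply rsum_ext. intros a Ha.
    unfold grad_phi, Bx. rewrite combo_apply. unfold aa. ring. }
  rewrite Eg. set (g := sqrt (16 * q)).
  assert (hg : 0 <= g) by apply sqrt_pos.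
  assert (hg2 : g * g = 16 * q) by (apply sqrt_sqrt; lra).
  pose proof (phi_nonneg N n Xs x) as hphi.
  set (ph := phi N n Xs x) in *.
  assert (Hp3 : ph ^ 3 <= K * q ^ 2) by apply HK.
  destruct (Req_dec ph 0) as [E0|Hph].
  { rewrite E0. unfold powr. destruct (Rle_dec g 0); [lra|].
    assert (0 < Rpower g (4/3)) by (unfold Rpower; apply exp_pos).
    assert (0 < C * Rpower g (4/3)) by (apply Rmult_lt_0_compat; lra). lra. }
  assert (hph : 0 < ph) by lra.
  assert (hgp : 0 < g).
  { destruct (Req_dec g 0) as [E|E]; [|lra]. exfalso. rewrite E in hg2.
    assert (q = 0) by lra. rewrite H in Hp3.
    assert (0 < ph ^ 3) by (apply pow_lt; auto). simpl in Hp3. lra. }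
  unfold powr. destruct (Rle_dec g 0); [lra|].
  assert (Eq : K * q ^ 2 = K / 256 * g ^ 4).
  { replace (g ^ 4) with ((g * g) * (g * g)) by ring. rewrite hg2. field. }
  assert (E1 : ph = Rpower (ph ^ 3) (/3)).
  { rewrite <- (Rpower_pow 3 ph) by auto. rewrite Rpower_mult.
    replace (INR 3 * / 3) with 1 by (simpl; field). rewrite Rpower_1; auto. }
  assert (E2 : Rpower (K / 256 * g ^ 4) (/3) = C * Rpower g (4 / 3)).
  { rewrite <- Rpower_mult_distr; [|apply Rdiv_lt_0_compat; lra|apply pow_lt; auto].
    unfold C. f_equal. rewrite <- (Rpower_pow 4 g) by auto. rewrite Rpower_mult.
    f_equal. simpl. field. }
  apply Rle_ge. rewrite E1, <- E2. apply Rle_Rpower_l.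
  - left. apply Rinv_0_lt_compat. lra.
  - split; [apply pow_lt; auto|]. rewrite <- Eq. exact Hp3.
Qed.
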